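(* Let $G$ be a noncyclic finite $p$-group for some prime $p$. (i) If $N$ and $M$ are normal subgroups of $G$ with $\eta(G) = \eta(G/N) = \eta(G/M)$, then $\eta(G) = \eta(G/NM)$. (ii) There exists a characteristic subgroup $X$ of $G$ such that $\eta(G) = \eta(G/X)$ and such that every normal subgroup $N$ of $G$ with $\eta(G/N) = \eta(G)$ satisfies $N \le X$.
   Context: A cyclic subgroup $C$ of a group $G$ is maximal cyclic if there is no cyclic subgroup $D$ of $G$ with $C < D$. $\eta(G)$ denotes the number of conjugacy classes of maximal cyclic subgroups of $G$. *)

(* Defs.v *)
From mathcomp Require Import all_boot all_fingroup all_solvable.
Set Implicit Arguments.
Unset Strict Implicit.
Unset Printing Implicit Defensive.
Local Open Scope group_scope.

Definition max_cyclic (gT : finGroupType) (G : {set gT}) : {set {set gT}} :=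
  [set C : {set gT} | [&& C \subset G, cyclic C &
     [forall D : {set gT}, ~~ [&& D \subset G, cyclic D & C \proper D]]]].

Definition eta (gT : finGroupType) (G : {set gT}) : nat :=
  #|[set C :^: G | C in max_cyclic G]|.

(* Main.v *)
Require Import Defs.
From mathcomp Require Import all_boot all_fingroup all_solvable.
Set Implicit Arguments.
Unset Strict Implicit.
Unset Printing Implicit Defensive.
Local Open Scope group_scope.

Lemma mcE (gT : finGroupType) (G C : {set gT}) :
  (C \in max_cyclic G) =
  [&& C \subset G, cyclic C &
     [forall D : {set gT}, ~~ [&& D \subset G, cyclic D & C \proper D]]].
Proof. by rewrite /max_cyclic inE. Qed.

Lemma mc_sub (gT : finGroupType) (G C : {set gT}) :
  C \in max_cyclic G -> C \subset G.
Proof. by rewrite mcE => /and3P[]. Qed.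

Lemma mc_cyc (gT : finGroupType) (G C : {set gT}) :
  C \in max_cyclic G -> cyclic C.
Proof. by rewrite mcE => /and3P[]. Qed.

Lemma mc_gen (gT : finGroupType) (G C : {set gT}) :
  C \in max_cyclic G -> exists2 c, c \in G & C = <[c]>.
Proof.
move=> H; have /cyclicP[c Ec] := mc_cyc H.
exists c => //; apply: (subsetP (mc_sub H)); rewrite Ec; exact: cycle_id.
Qed.

Lemma mc_max (gT : finGroupType) (G C D : {set gT}) :
  C \in max_cyclic G -> D \subset G -> cyclic D -> C \subset D -> D = C.
Proof.
rewrite mcE => /and3P[_ _ /forallP /(_ D)] H sDG cD sCD.
apply/eqP; rewrite eqEsubset; apply/andP; split => //.
apply: contraR H => nDC; rewrite sDG cD /= properE sCD nDC.
by [].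
Qed.

Lemma mc_intro (gT : finGroupType) (G C : {set gT}) :
  C \subset G -> cyclic C ->
  (forall D : {set gT}, D \subset G -> cyclic D -> C \subset D -> D \subset C) ->
  C \in max_cyclic G.
Proof.
move=> sCG cC H; rewrite mcE sCG cC /=; apply/forallP => D.
apply/negP => /and3P[sDG cD]; rewrite properE => /andP[sCD nDC].
by rewrite (H D sDG cD sCD) in nDC.
Qed.

Lemma mc_exists (gT : finGroupType) (G : {group gT}) x :
  x \in G -> exists2 C, C \in max_cyclic G & x \in C.
Proof.
move=> xG.
have gx : (fun H : {group gT} => cyclic H && (H \subset G)) <[x]>%G.
  by rewrite /= cycle_cyclic cycle_subG.
have [H mH sxH] := @maxgroup_exists _ (fun H : {group gT} => cyclic H && (H \subset G)) _ gx.
exists (H : {set gT}); last exact: (subsetP sxH x (cycle_id x)).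
have /andP[cH sHG] := maxgroupp mH.
apply: mc_intro => // D sDG cD sHD.
have /cyclicP[d Ed] := cD; subst D.
have := maxgroupP mH => [[_ /(_ <[d]>%G)]] /= -> //.
by rewrite cycle_cyclic.
Qed.

Lemma mc_conj (gT : finGroupType) (G : {group gT}) C g :
  C \in max_cyclic G -> g \in G -> C :^ g \in max_cyclic G.
Proof.
move=> mC gG; have [c cG EC] := mc_gen mC; subst C.
apply: mc_intro.
- by rewrite -cycleJ cycle_subG groupJ.
- by rewrite -cycleJ cycle_cyclic.
move=> D sDG cD sCD.
have /cyclicP[d Ed] := cD; subst D.
rewrite -sub_conjgV.
have := mc_max mC (D := <[d]> :^ g^-1).
rewrite -cycleJ cycle_cyclic => -> //.
- by rewrite cycle_subG groupJ ?groupV // -cycle_subG.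
- by rewrite cycleJ -sub_conjg.
Qed.

Lemma conj_refl (gT : finGroupType) (G : {group gT}) (A : {set gT}) :
  A \in A :^: G.
Proof. by apply/imsetP; exists 1; rewrite ?group1 ?conjsg1. Qed.

Definition gm (gT : finGroupType) (N : {group gT}) (K : {set {set gT}}) :
  {set {set coset_of N}} := [set D / N | D in K].

Definition Aset (gT : finGroupType) (G : {set gT}) := [set C :^: G | C in max_cyclic G].

Lemma etaE (gT : finGroupType) (G : {set gT}) : eta G = #|Aset G|.
Proof. by []. Qed.

Lemma conj_class_eq (gT : finGroupType) (G : {group gT}) (A : {set gT}) g :
  g \in G -> (A :^ g) :^: G = A :^: G.
Proof. by move=> gG; rewrite conjugates_conj lcoset_id. Qed.

Lemma quotE (gT : finGroupType) (G N : {group gT}) :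
  G \subset 'N(N) -> G / N = [set coset N x | x in G].
Proof. by move=> nG; rewrite /quotient morphimEsub. Qed.

Lemma gm_conj (gT : finGroupType) (G N : {group gT}) (C : {set gT}) :
  G \subset 'N(N) -> gm N (C :^: G) = (C / N) :^: (G / N).
Proof.
move=> nG; rewrite /gm /conjugates -imset_comp quotE // -imset_comp.
apply: eq_in_imset => x xG /=; rewrite quotientJ //; exact: (subsetP nG).
Qed.

Lemma B_eq (gT : finGroupType) (G N : {group gT}) : N <| G ->
  Aset (G / N) =
  gm N @: [set C :^: G | C in [set C in max_cyclic G | C / N \in max_cyclic (G / N)]].
Proof.
move=> nN; have nG := normal_norm nN.
apply/eqP; rewrite eqEsubset; apply/andP; split; apply/subsetP => K.
  case/imsetP => D mD ->.
  have [d dG Ed] := mc_gen mD.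
  case/morphimP: dG => x nx xG Edx.
  have [C mC xC] := mc_exists xG.
  have [c cG EC] := mc_gen mC; subst C.
  have ncN : c \in 'N(N) by exact: (subsetP nG).
  have ED : <[c]> / N = D.
    apply: (mc_max mD).
    - by apply: quotientS; rewrite cycle_subG.
    - by rewrite quotient_cycle // cycle_cyclic.
    by rewrite Ed Edx cycle_subG mem_quotient.
  apply/imsetP; exists (<[c]> :^: G).
    by apply/imsetP; exists <[c]> => //; rewrite inE mC ED mD.
  by rewrite gm_conj // ED.
case/imsetP => K' /imsetP[C]; rewrite inE => /andP[mC mCN] -> ->.
by rewrite gm_conj //; apply/imsetP; exists (C / N).
Qed.

Definition Tset (gT : finGroupType) (G : {set gT}) :=
  [set n in G | [forall c, (<[c]> \in max_cyclic G) ==> (<[c * n]> \in <[c]> :^: G)]].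

Lemma TP (gT : finGroupType) (G : {set gT}) n :
  reflect (n \in G /\ forall c, <[c]> \in max_cyclic G -> <[c * n]> \in <[c]> :^: G)
          (n \in Tset G).
Proof.
rewrite inE; apply: (iffP andP) => [[nG /forallP H]|[nG H]]; split => //.
  by move=> c mc; have /implyP := H c; apply.
by apply/forallP => c; apply/implyP; apply: H.
Qed.

Lemma cond_quot_mc (gT : finGroupType) (G N : {group gT}) :
  N <| G -> N \subset Tset G -> forall C, C \in max_cyclic G -> C / N \in max_cyclic (G / N).
Proof.
move=> nN sNT C mC; have nG := normal_norm nN.
have [c cG EC] := mc_gen mC; subst C.
have ncN : c \in 'N(N) by exact: (subsetP nG).
rewrite quotient_cycle //.
apply: mc_intro.
- by rewrite cycle_subG mem_quotient.
- exact: cycle_cyclic.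
move=> D sDG cD sCD.
have /cyclicP[d Ed] := cD; subst D.
have := subsetP sDG d (cycle_id d); case/morphimP => x nx xG Edx; subst d.
have := subsetP sCD _ (cycle_id _); case/cycleP => k Ek.
set n := c^-1 * x ^+ k.
have nNn : n \in N.
  apply: coset_idr; first by rewrite groupM ?groupV ?groupX.
  by rewrite morphM ?groupV ?groupX // morphV // morphX // -Ek mulVg.
have /TP[_ Tn] := subsetP sNT n nNn.
have /imsetP[g gG Eg] := Tn c mC.
rewrite /n mulKVg in Eg.
have [C' mC' xC'] := mc_exists xG.
have mxk : <[x ^+ k]> \in max_cyclic G by rewrite Eg mc_conj.
have [c' c'G EC'] := mc_gen mC'; subst C'.
have E' : <[c']> = <[x ^+ k]>.
  apply: (mc_max mxk); rewrite ?cycle_subG ?cycle_cyclic // groupX //.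
have xin : x \in <[c]> :^ g by rewrite -Eg -E'.
have sub : <[coset N x]> \subset (<[c]> / N) :^ coset N g.
  by rewrite -quotientJ ?(subsetP nG) // cycle_subG mem_quotient // -cycleJ cycle_subG -cycleJ.
have : <[coset N c]> == <[coset N x]>.
  rewrite eqEcard sCD /=.
  by rewrite (leq_trans (subset_leq_card sub)) // cardJg quotient_cycle.
by move/eqP <-.
Qed.

Lemma cond_inj (gT : finGroupType) (G N : {group gT}) :
  N <| G -> N \subset Tset G -> forall C1 C2 g,
  C1 \in max_cyclic G -> C2 \in max_cyclic G -> g \in G ->
  C1 / N = (C2 :^ g) / N -> C2 :^ g \in C1 :^: G.
Proof.
move=> nN sNT C1 C2 g mC1 mC2 gG E.
have nG := normal_norm nN.
have [c1 c1G EC1] := mc_gen mC1; subst C1.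
have [c2 c2G EC2] := mc_gen mC2; subst C2.
have nc1 : c1 \in 'N(N) by exact: (subsetP nG).
have : coset N c1 \in (<[c2]> :^ g) / N by rewrite -E mem_quotient ?cycle_id.
case/morphimP => y ny yC Ey.
set n := c1^-1 * y.
have nNn : n \in N.
  apply: coset_idr; first by rewrite groupM ?groupV.
  by rewrite morphM ?groupV // morphV // -Ey mulVg.
have /TP[_ Tn] := subsetP sNT n nNn.
have := Tn c1 mC1; rewrite /n mulKVg => yc.
have /imsetP[h hG Eh] := yc.
have my : <[y]> \in max_cyclic G by rewrite Eh mc_conj.
have mc2g := mc_conj mC2 gG.
have -> : <[c2]> :^ g = <[y]> .
  apply: (mc_max my); first exact: mc_sub mc2g.
    exact: mc_cyc mc2g.
  by rewrite cycle_subG.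
exact: yc.
Qed.

Lemma eta_cond (gT : finGroupType) (G N : {group gT}) :
  N <| G -> N \subset Tset G -> eta (G / N) = eta G.
Proof.
move=> nN sNT; have nG := normal_norm nN.
rewrite !etaE B_eq //.
have -> : [set C in max_cyclic G | C / N \in max_cyclic (G / N)] = max_cyclic G.
  apply/setP => C; rewrite inE; case: (boolP (C \in max_cyclic G)) => //= mC.
  by rewrite (cond_quot_mc nN sNT mC).
apply/eqP/imset_injP => K1 K2 /imsetP[C1 mC1 ->] /imsetP[C2 mC2 ->].
rewrite !gm_conj // => E.
have : C1 / N \in (C2 / N) :^: (G / N) by rewrite -E conj_refl.
case/imsetP => gb; rewrite quotE // => /imsetP[g gG ->].
rewrite -quotientJ ?(subsetP nG) // => E1.
have /imsetP[h hG Eh] := cond_inj nN sNT mC1 mC2 gG E1.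
by rewrite -(conj_class_eq C2 gG) Eh conj_class_eq.
Qed.

Lemma T_group_set (gT : finGroupType) (G : {group gT}) : group_set (Tset G).
Proof.
apply/group_setP; split.
  apply/TP; split => // c mc; rewrite mulg1; exact: conj_refl.
move=> n m /TP[nG Tn] /TP[mG Tm]; apply/TP; split; first exact: groupM.
move=> c mc; have /imsetP[g gG Eg] := Tn c mc.
have mcn : <[c * n]> \in max_cyclic G by rewrite Eg mc_conj.
have := Tm _ mcn; rewrite mulgA Eg conj_class_eq //.
Qed.

Canonical T_group (gT : finGroupType) (G : {group gT}) := Group (T_group_set G).

Lemma E_count (gT : finGroupType) (G N : {group gT}) :
  N <| G -> eta (G / N) = eta G ->
  (forall C, C \in max_cyclic G -> C / N \in max_cyclic (G / N)) /\
  (forall C1 C2, C1 \in max_cyclic G -> C2 \in max_cyclic G ->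
     C1 / N \in (C2 / N) :^: (G / N) -> C1 \in C2 :^: G).
Proof.
move=> nN; have nG := normal_norm nN.
rewrite !etaE => Eeta.
set S := [set C in max_cyclic G | C / N \in max_cyclic (G / N)].
set A' := [set C :^: G | C in S].
have sA : A' \subset Aset G.
  by apply: imsetS; apply/subsetP => C; rewrite inE => /andP[].
have h1 : #|Aset (G / N)| <= #|A'| by rewrite B_eq // leq_imset_card.
have eA : A' = Aset G.
  by apply/eqP; rewrite eqEcard sA /= -Eeta.
have inj : {in A' &, injective (gm N)}.
  apply/imset_injP; rewrite eqn_leq leq_imset_card /= -B_eq // Eeta eA //.
have mcq : forall C, C \in max_cyclic G -> C / N \in max_cyclic (G / N).
  move=> C mC.
  have : C :^: G \in A' by rewrite eA; apply/imsetP; exists C.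
  case/imsetP => C'; rewrite inE => /andP[mC' mC'N] E.
  have : C \in C' :^: G by rewrite -E conj_refl.
  case/imsetP => x xG ->.
  rewrite quotientJ ?(subsetP nG) //.
  by apply: mc_conj => //; apply: mem_quotient.
split => // C1 C2 mC1 mC2 /imsetP[gb gbG Eb].
have e1 : C1 :^: G \in A' by rewrite eA; apply/imsetP; exists C1.
have e2 : C2 :^: G \in A' by rewrite eA; apply/imsetP; exists C2.
have := inj _ _ e1 e2.
rewrite !gm_conj // Eb conj_class_eq // => /(_ erefl) <-.
exact: conj_refl.
Qed.

Lemma E_cond (gT : finGroupType) (p : nat) (G N : {group gT}) :
  prime p -> p.-group G -> ~~ cyclic G -> N <| G -> eta (G / N) = eta G ->
  N \subset Tset G.
Proof.
move=> pr pG ncG nN Eeta; have nG := normal_norm nN; have sNG := normal_sub nN.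
have [mcq conjq] := E_count nN Eeta.
apply/subsetP => n nNn; have nG' : n \in G := subsetP sNG n nNn.
apply/TP; split => // c mc.
have cG : c \in G by rewrite -cycle_subG (mc_sub mc).
set y := c * n.
have yG : y \in G by rewrite groupM.
have [C' mC' yC'] := mc_exists yG.
have [c' c'G EC'] := mc_gen mC'; subst C'.
have ncN : c \in 'N(N) by exact: (subsetP nG).
have nyN : y \in 'N(N) by exact: (subsetP nG).
have nc'N : c' \in 'N(N) by exact: (subsetP nG).
have cy : coset N y = coset N c.
  by rewrite /y morphM ?(subsetP nG) //= (coset_id nNn) mulg1.
have Eq : <[c']> / N = <[c]> / N.
  apply: (mc_max (mcq _ mc)).
  - by apply: quotientS; apply: mc_sub mC'.
  - by rewrite quotient_cycle // cycle_cyclic.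
  by rewrite (quotient_cycle ncN) cycle_subG -cy; apply: mem_quotient.
have Cc : <[c']> \in <[c]> :^: G by apply: conjq => //; rewrite Eq conj_refl.
have sub1 : <[c']> \subset <[y]> * (N :&: <[c']>).
  rewrite group_modl ?cycle_subG // subsetI subxx andbT.
  have nyN' : <[y]> \subset 'N(N) by rewrite cycle_subG.
  rewrite -(norm_joinEl nyN') -(quotientSGK (H := N) (A := <[c']>)) ?joing_subr ?cycle_subG //.
  change (<[c']> / N \subset (<[y]> <*> N) / N).
  by rewrite (norm_joinEl nyN') quotientMidr Eq !quotient_cycle // cy.
have pC' : p.-group <[c']> by apply: pgroupS pG; rewrite cycle_subG.
have cyc := cycle_cyclic c'.
have sKC : (N :&: <[c']>)%G \subset <[c']> by rewrite subsetIr.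
have sHC : <[y]> \subset <[c']> by rewrite cycle_subG.
have pK := pgroupS sKC pC'.
have pH := pgroupS sHC pC'.
have p1 := prime_gt1 pr.
case: (leqP (logn p #|<[y]>|) (logn p #|N :&: <[c']>|)) => le.
  have sHK : <[y]> \subset N :&: <[c']>.
    by rewrite -(cardSg_cyclic cyc) // (card_pgroup pH) (card_pgroup pK) dvdn_Pexp2l.
  have sCN : <[c']> \subset N.
    apply: (subset_trans sub1); apply: (subset_trans (mulSg _ sHK)).
    by rewrite mulGid subsetIl.
  have triv : <[c]> / N \subset (1 : {set coset_of N}) by rewrite -Eq quotient_sub1 // cycle_subG.
  have GN : G \subset N.
    rewrite -quotient_sub1 //; apply/subsetP => xb xbG.
    have := mc_max (mcq _ mc) (D := <[xb]>).
    rewrite cycle_subG cycle_cyclic => /(_ xbG erefl (subset_trans triv (sub1G _))) E.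
    by apply: (subsetP triv); rewrite -E cycle_id.
  have allc : forall C1, C1 \in max_cyclic G -> C1 \in <[c]> :^: G.
    move=> C1 mC1; apply: conjq => //.
    have [c1 c1G EC1] := mc_gen mC1; subst C1.
    have -> : <[c1]> / N = (1 : {set coset_of N}).
      apply/eqP; rewrite eqEsubset sub1G andbT.
      by rewrite quotient_sub1 ?cycle_subG ?(subsetP nG) ?(subsetP GN).
    have -> : <[c]> / N = (1 : {set coset_of N}).
      by apply/eqP; rewrite eqEsubset sub1G andbT.
    exact: conj_refl.
  have [E | [M maxM sM]] := maximal_exists (H := <[c]>%G) (G := G) (mc_sub mc).
    by rewrite -E cycle_cyclic in ncG.
  have nM := p_maximal_normal pG maxM.
  have GM : G \subset M.
    apply/subsetP => x xG.
    have [C1 mC1 xC1] := mc_exists xG.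
    have /imsetP[g gG Eg] := allc _ mC1.
    have : C1 \subset M :^ g by rewrite Eg conjSg.
    rewrite ((normsP (normal_norm nM)) g gG) => sM1.
    exact: (subsetP sM1).
  have := maxgroupp maxM; rewrite /= properE GM andbF //.
have sKH : N :&: <[c']> \subset <[y]>.
  by rewrite -(cardSg_cyclic cyc) // (card_pgroup pH) (card_pgroup pK) dvdn_Pexp2l // ltnW.
have -> : <[y]> = <[c']>.
  apply/eqP; rewrite eqEsubset sHC /=.
  apply: (subset_trans sub1); apply: (subset_trans (mulgS _ sKH)).
  by rewrite mulGid.
exact: Cc.
Qed.

Lemma T_sub (gT : finGroupType) (G : {group gT}) : Tset G \subset G.
Proof. by apply/subsetP => n /TP[]. Qed.

Lemma T_char (gT : finGroupType) (G : {group gT}) : T_group G \char G.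
Proof.
apply/charP; split; first exact: T_sub.
move=> f injf fG.
have sTG := T_sub G.
have fin : forall x, x \in G -> f x \in G.
  by move=> x xG; have := mem_morphim f xG xG; rewrite fG.
apply/eqP; rewrite eqEcard card_injm // leqnn andbT.
apply/subsetP => y /morphimP[n _ nT ->].
have nG := subsetP sTG n nT.
apply/TP; split; first exact: fin.
move=> c mc.
have : c \in f @* G by rewrite fG -cycle_subG (mc_sub mc).
case/morphimP => c0 c0D c0G Ec; subst c.
have mc0 : <[c0]> \in max_cyclic G.
  apply: mc_intro; rewrite ?cycle_subG ?cycle_cyclic //.
  move=> D sDG cD sCD.
  have /cyclicP[d Ed] := cD; subst D.
  have := mc_max mc (D := f @* <[d]>).
  rewrite -morphim_cycle // => E.
  have sfD : f @* <[d]> \subset G by apply: subset_trans (morphimS f sDG) _; rewrite fG.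
  have {}E := E sfD (morphim_cyclic f (cycle_cyclic d)) (morphimS f sCD).
  by rewrite -(injmSK injf _ sDG) E.
have /TP[_ Tn] := nT.
have /imsetP[g gG Eg] := Tn c0 mc0.
apply/imsetP; exists (f g); first exact: fin.
by rewrite -morphM // -morphim_cycle ?groupM // Eg morphimJ // morphim_cycle.
Qed.

Theorem corollary4p2 (gT : finGroupType) (p : nat) (G : {group gT}) :
  prime p -> p.-group G -> ~~ cyclic G ->
  (forall N M : {group gT}, N <| G -> M <| G ->
     eta G = eta (G / N) -> eta G = eta (G / M) ->
     eta G = eta (G / (N * M)))
  /\
  (exists X : {group gT},
     [/\ X \char G, eta G = eta (G / X) &
       forall N : {group gT}, N <| G -> eta (G / N) = eta G -> N \subset X]).
Proof.
move=> pr pG ncG; split.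
  move=> N M nN nM EN EM.
  have sNT := E_cond pr pG ncG nN (esym EN).
  have sMT := E_cond pr pG ncG nM (esym EM).
  have nMN : M \subset 'N(N) by apply: subset_trans (normal_sub nM) (normal_norm nN).
  rewrite -(norm_joinEr nMN).
  symmetry; apply: eta_cond; first exact: normalY.
  by rewrite join_subG sNT sMT.
exists (T_group G); split.
- exact: T_char.
- by rewrite eta_cond // char_normal // T_char.
- by move=> N nN E; apply: E_cond pr pG ncG nN E.
Qed.
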